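(* Let $(A,\Delta)=\mathrm{QMap}_\phi(\mathrm{Qs}(M_2))$ with generators $\alpha,\beta,\gamma$ as described below, and set $X=\alpha+\alpha^*$, $Y=\beta+\gamma$. Then $X=X^*$, $Y=Y^*$, $XY+YX=0$, $X^2+Y^2=\mathbb{1}_A$, $\Delta(X)=\mathbb{1}_A\otimes X+X\otimes Y$ and $\Delta(Y)=Y\otimes Y$.
   Context: $A$ is the universal unital $\mathrm{C}^*$-algebra generated by $\alpha,\beta,\gamma$ subject to $\beta=\beta^*$, $\gamma=\gamma^*$, $\alpha^*\alpha+\gamma^2+\alpha\alpha^*+\beta^2=\mathbb{1}$, $\alpha^*\beta+\gamma\alpha^*+\alpha\gamma+\beta\alpha=0$, $\alpha^2+\beta\gamma=0$, $\alpha\beta+\beta\alpha^*=0$, $\gamma\alpha+\alpha^*\gamma=0$, and $\Delta:A\to A\otimes A$ (minimal tensor product) is the unital $*$-homomorphism given by $\Delta(\alpha)=\mathbb{1}\otimes\alpha+(\alpha^*\alpha+\gamma^2)\otimes(\alpha^*-\alpha)+\alpha\otimes\beta+\alpha^*\otimes\gamma$, $\Delta(\beta)=(\alpha\gamma+\beta\alpha)\otimes(\alpha-\alpha^* )+\beta\otimes\beta+\gamma\otimes\gamma$, $\Delta(\gamma)=(\beta\alpha+\alpha\gamma)\otimes(\alpha^*-\alpha)+\gamma\otimes\beta+\beta\otimes\gamma$. (This $(A,\Delta)$ is the quantum commutant of the automorphism $\phi(m)=wmw$, $w=\begin{bmatrix}0&1\\1&0\end{bmatrix}$, of $M_2$.)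 *)

(* Defs.v *)
From HB Require Import structures.
From mathcomp Require Import all_boot all_order all_algebra all_field.
Set Implicit Arguments. Unset Strict Implicit. Unset Printing Implicit Defensive.
Import Order.TTheory GRing.Theory Num.Theory.
Local Open Scope ring_scope.

Definition star_alg (A : algType algC) (s : A -> A) : Prop :=
  [/\ involutive s,
      forall x y, s (x + y) = s x + s y,
      forall (c : algC) x, s (c *: x) = c^* *: s x,
      forall x y, s (x * y) = s y * s x
    & s 1 = 1].

(* t : A -> A -> B models the elementary tensors a (x) b in the tensor
   product algebra B = A (x) A: bilinear, multiplicative on elementary
   tensors, unital, and compatible with the involutions. *)
Definition tensor_map (A B : algType algC) (sA : A -> A) (sB : B -> B)
  (t : A -> A -> B) : Prop :=
  [/\ forall (c : algC) a a' b, t (c *: a + a') b = c *: t a b + t a' b,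
      forall (c : algC) a b b', t a (c *: b + b') = c *: t a b + t a b',
      forall a b a' b', t a b * t a' b' = t (a * a') (b * b'),
      t 1 1 = 1
    & forall a b, sB (t a b) = t (sA a) (sA b)].

Definition star_hom (A B : algType algC) (sA : A -> A) (sB : B -> B)
  (f : A -> B) : Prop :=
  [/\ forall (c : algC) x y, f (c *: x + y) = c *: f x + f y,
      forall x y, f (x * y) = f x * f y,
      f 1 = 1
    & forall x, f (sA x) = sB (f x)].

(* Main.v *)
Require Import Defs.
From HB Require Import structures.
From mathcomp Require Import all_boot all_order all_algebra all_field.
Import Order.TTheory GRing.Theory Num.Theory.
Local Open Scope ring_scope.

Theorem mainTheorem9 (A B : algType algC) (sA : A -> A) (sB : B -> B)
  (t : A -> A -> B) (Delta : A -> B) (a b g : A)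
  (HA : star_alg sA) (HB : star_alg sB) (Ht : tensor_map sA sB t)
  (HD : star_hom sA sB Delta)
  (Hb : sA b = b) (Hg : sA g = g)
  (R1 : sA a * a + g * g + a * sA a + b * b = 1)
  (R2 : sA a * b + g * sA a + a * g + b * a = 0)
  (R3 : a * a + b * g = 0)
  (R4 : a * b + b * sA a = 0)
  (R5 : g * a + sA a * g = 0)
  (Da : Delta a = t 1 a + t (sA a * a + g * g) (sA a - a) + t a b + t (sA a) g)
  (Db : Delta b = t (a * g + b * a) (a - sA a) + t b b + t g g)
  (Dg : Delta g = t (b * a + a * g) (sA a - a) + t g b + t b g) :
  let X := a + sA a in
  let Y := b + g in
  (sA X = X /\ sA Y = Y) /\ (X * Y + Y * X = 0 /\ X * X + Y * Y = 1) /\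
  (Delta X = t 1 X + t X Y /\ Delta Y = t Y Y).
Proof.
case: HA => sK sD sZ sM s1.
case: HB => tK tD tZ tM t1.
case: Ht => tl tr tmul t11 tstar.
case: HD => Dlin Dmul D1 Dstar.
have tDl : forall x y z, t (x + y) z = t x z + t y z.
  by move=> x y z; rewrite -[x](@scale1r algC) tl !scale1r.
have tDr : forall x y z, t z (x + y) = t z x + t z y.
  by move=> x y z; rewrite -[x](@scale1r algC) tr !scale1r.
have tr0 : forall z, t z 0 = 0.
  by move=> z; apply: (addrI (t z 0)); rewrite -tDr !addr0.
have DD : forall x y, Delta (x + y) = Delta x + Delta y.
  by move=> x y; rewrite -[x](@scale1r algC) Dlin !scale1r.
have s0 : sA 0 = 0 by apply: (addrI (sA 0)); rewrite -sD !addr0.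
have sN : forall x, sA (- x) = - sA x.
  move=> x; apply: (addrI (sA x)); rewrite -sD !subrr //.
have cab : forall x y : A, (y - x) + (x - y) = 0.
  by move=> x y; rewrite -[x - y]opprB addrN.
move=> X Y; split; [split|split; [split|split]].
- by rewrite /X sD sK addrC.
- by rewrite /Y sD Hb Hg.
- rewrite /X /Y !mulrDl !mulrDr.
  have -> : forall (x1 x2 x3 x4 x5 x6 x7 x8 : A),
    ((x1+x2)+(x3+x4)) + ((x5+x6)+(x7+x8)) = (x1+x6)+(x7+x4)+(((x3+x8)+x2)+x5).
    by move=> *; rewrite !addrA (ACl (1*6*7*4*3*8*2*5)%AC) /=.
  by rewrite R4 R5 R2 !addr0.
- rewrite /X /Y !mulrDl !mulrDr.
  have -> : forall (x1 x2 x3 x4 x5 x6 x7 x8 : A),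
    ((x1+x2)+(x3+x4)) + ((x5+x6)+(x7+x8)) = (x1+x6)+(x4+x7)+(((x3+x8)+x2)+x5).
    by move=> *; rewrite !addrA (ACl (1*6*4*7*3*8*2*5)%AC) /=.
  have R3' : sA a * sA a + g * b = 0 by rewrite -Hb -Hg -!sM -sD R3 s0.
  by rewrite R3 R3' R1 !add0r.
- have sP : sA (sA a * a + g * g) = sA a * a + g * g by rewrite sD !sM sK Hg.
  have sd : sA (sA a - a) = a - sA a by rewrite sD sN sK.
  rewrite /X /Y DD Dstar Da !tD !tstar sP sd s1 sK Hb Hg.
  have e : t (sA a * a + g * g) (sA a - a) + t (sA a * a + g * g) (a - sA a) = 0.
    by rewrite -tDr cab tr0.
  move: (t _ (sA a - a)) (t _ (a - sA a)) e => u v e.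
  rewrite (tDr a (sA a) 1) (tDl a (sA a) (b + g)) (tDr b g a) (tDr b g (sA a)) !addrA.
  rewrite (ACl (2*6*1*5*3*8*7*4)%AC) /=.
  by rewrite e add0r.
- rewrite /Y DD Db Dg.
  have e : t (a * g + b * a) (a - sA a) + t (b * a + a * g) (sA a - a) = 0.
    by rewrite [b * a + a * g]addrC -tDr cab tr0.
  move: (t _ (a - sA a)) (t _ (sA a - a)) e => u v e.
  rewrite (tDr b g (b + g)) (tDl b g b) (tDl b g g) !addrA.
  rewrite (ACl (1*4*2*5*6*3)%AC) /=.
  by rewrite e add0r.
Qed.
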